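(* Assume the standing conventions of the context. (i) If $m'=m+1$, $Z'$ is regular and $D_Z=\{Z'\}$, then $D_{Z'}=\{Z\}$. (ii) If $m'=m$, $Z$ is regular and $D_{Z'}=\{Z\}$, then $D_Z=\{Z'\}$.
   Context: A symbol is an array $\Lambda=\binom{a'_1,\ldots,a'_{m_1}}{b'_1,\ldots,b'_{m_2}}$ of two strictly decreasing finite sequences of nonnegative integers (top row, bottom row); its defect is $\mathrm{def}(\Lambda)=m_1-m_2$. Standing assumptions: $Z=\binom{a_1,\ldots,a_{m+1}}{b_1,\ldots,b_m}$ is a special symbol of defect $1$, i.e. $a_1\ge b_1\ge a_2\ge b_2\ge\cdots\ge b_m\ge a_{m+1}$; $Z'=\binom{c_1,\ldots,c_{m'}}{d_1,\ldots,d_{m'}}$ is a special symbol of defect $0$, i.e. $c_1\ge d_1\ge c_2\ge d_2\ge\cdots\ge c_{m'}\ge d_{m'}$; and $m'\in\{m,m+1\}$. For a symbol $Y$, $Y_{\mathrm I}$ is the set of entries of $Y$ occurring in exactly one row; $Y$ is regular if no entry occurs in both rows. For $M\subset Z_{\mathrm I}$, $\Lambda_M$ is the symbol obtained from $Z$ by moving every entry of $M$ to the other row (rows re-sorted decreasingly); for $N\subset Z'_{\mathrm I}$, $\Lambda_N$ is obtained from $Z'$ in the same way. $\overline{\mathcal S}_Z=\{\Lambda_M: M\subset Z_{\mathrm I}\}$, $\overline{\mathcal S}_{Z'}=\{\Lambda_N:N\subset Z'_{\mathrm I}\}$; $\mathcal S_{Z,1}$ (resp. $\mathcal S_{Z',0}$)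 is the set of elements of $\overline{\mathcal S}_Z$ of defect $1$ (resp. of $\overline{\mathcal S}_{Z'}$ of defect $0$). Relation $\overline{\mathcal B}^+_{Z,Z'}\subset\overline{\mathcal S}_Z\times\overline{\mathcal S}_{Z'}$: for $\Lambda=\binom{a'_1,\ldots,a'_{m_1}}{b'_1,\ldots,b'_{m_2}}\in\overline{\mathcal S}_Z$ and $\Lambda'=\binom{c'_1,\ldots,c'_{m'_1}}{d'_1,\ldots,d'_{m'_2}}\in\overline{\mathcal S}_{Z'}$, $(\Lambda,\Lambda')\in\overline{\mathcal B}^+_{Z,Z'}$ iff $\mathrm{def}(\Lambda')=1-\mathrm{def}(\Lambda)$ and: if $m'=m$, $a'_i>d'_i\ge a'_{i+1}$ for $1\le i\le m'_2$ and $b'_{i-1}>c'_i\ge b'_i$ for $1\le i\le m'_1$; if $m'=m+1$, $a'_i\ge d'_i>a'_{i+1}$ for $1\le i\le m'_2$ and $b'_{i-1}\ge c'_i>b'_i$ for $1\le i\le m'_1$; here $b'_0=+\infty$ and nonexistent entries $a'_j,b'_j$ beyond the row lengths are $-\infty$. Then $\mathcal D_{Z,Z'}=\overline{\mathcal B}^+_{Z,Z'}\cap(\mathcal S_{Z,1}\times\mathcal S_{Z',0})$, $D_Z=\{\Lambda'\mid (Z,\Lambda')\in\mathcal D_{Z,Z'}\}$ and $D_{Z'}=\{\Lambda\mid(\Lambda,Z')\in\mathcal D_{Z,Z'}\}$. *)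

(* Defs.v *)
From mathcomp Require Import all_boot all_order all_algebra.
Set Implicit Arguments. Unset Strict Implicit. Unset Printing Implicit Defensive.

(* A symbol: (top row, bottom row), each row a strictly decreasing list of nats. *)
Definition symbol := (seq nat * seq nat)%type.

Definition is_symbol (L : symbol) : Prop :=
  sorted (fun x y => y < x) L.1 /\ sorted (fun x y => y < x) L.2.

Definition defect (L : symbol) : int := ((size L.1)%:Z - (size L.2)%:Z)%R.

(* Z = (a_1..a_{m+1} ; b_1..b_m) special of defect 1 (0-indexed lists). *)
Definition special1 (m : nat) (Z : symbol) : Prop :=
  is_symbol Z /\ size Z.1 = m.+1 /\ size Z.2 = m /\
  (forall i, i < m -> nth 0 Z.2 i <= nth 0 Z.1 i /\ nth 0 Z.1 i.+1 <= nth 0 Z.2 i).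

Definition special0 (m' : nat) (Z' : symbol) : Prop :=
  is_symbol Z' /\ size Z'.1 = m' /\ size Z'.2 = m' /\
  (forall i, i < m' -> nth 0 Z'.2 i <= nth 0 Z'.1 i) /\
  (forall i, i.+1 < m' -> nth 0 Z'.1 i.+1 <= nth 0 Z'.2 i).

(* x occurs in exactly one row, i.e. x \in Y_I *)
Definition in_single (Y : symbol) (x : nat) : bool := (x \in Y.1) != (x \in Y.2).

Definition regular (Y : symbol) : Prop := forall x, ~~ ((x \in Y.1) && (x \in Y.2)).

Definition move_entries (Y : symbol) (M : seq nat) : symbol :=
  (sort geq ([seq x <- Y.1 | x \notin M] ++ [seq x <- Y.2 | x \in M]),
   sort geq ([seq x <- Y.2 | x \notin M] ++ [seq x <- Y.1 | x \in M])).

Definition in_Sbar (Y L : symbol) : Prop :=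
  exists M : seq nat, all (in_single Y) M /\ L = move_entries Y M.

Inductive ext := NegInf | Fin of nat | PosInf.

Definition ext_le (x y : ext) : bool :=
  match x, y with
  | NegInf, _ => true
  | _, PosInf => true
  | Fin a, Fin b => a <= b
  | _, _ => false
  end.
Definition ext_lt (x y : ext) : bool := ~~ ext_le y x.

Definition entry (s : seq nat) (j : nat) : ext :=
  if j < size s then Fin (nth 0 s j) else NegInf.

(* b'_{j} in the paper's 1-indexed convention with b'_0 = +oo *)
Definition entry1 (s : seq nat) (j : nat) : ext :=
  if j is j'.+1 then entry s j' else PosInf.

(* The relation Bbar^+_{Z,Z'}; m, m' are the parameters of Z, Z'.
   Indices are shifted to 0-based: paper's a'_i = entry A (i-1), etc. *)
Definition Bplus (m m' : nat) (L L' : symbol) : Prop :=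
  let A := L.1 in let B := L.2 in let C := L'.1 in let D := L'.2 in
  (defect L' = 1 - defect L)%R /\
  if m' == m then
    (forall j, j < size D ->
       ext_lt (Fin (nth 0 D j)) (entry A j) /\ ext_le (entry A j.+1) (Fin (nth 0 D j))) /\
    (forall j, j < size C ->
       ext_lt (Fin (nth 0 C j)) (entry1 B j) /\ ext_le (entry B j) (Fin (nth 0 C j)))
  else
    (forall j, j < size D ->
       ext_le (Fin (nth 0 D j)) (entry A j) /\ ext_lt (entry A j.+1) (Fin (nth 0 D j))) /\
    (forall j, j < size C ->
       ext_le (Fin (nth 0 C j)) (entry1 B j) /\ ext_lt (entry B j) (Fin (nth 0 C j))).

(* D_{Z,Z'} = Bplus intersected with S_{Z,1} x S_{Z',0} *)
Definition inD (m m' : nat) (Z Z' L L' : symbol) : Prop :=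
  Bplus m m' L L' /\
  (in_Sbar Z L /\ (defect L = 1)%R) /\ (in_Sbar Z' L' /\ (defect L' = 0)%R).

(* Main.v *)
Require Import Defs.
From mathcomp Require Import all_boot all_order all_algebra.
From mathcomp Require Import zify.
Set Implicit Arguments. Unset Strict Implicit. Unset Printing Implicit Defensive.

Definition sdec (s : seq nat) := sorted (fun x y => y < x) s.

Lemma trans_gt : transitive (fun x y : nat => y < x).
Proof. move=> a b c h1 h2; lia. Qed.

Lemma sdec_lt s i j : sdec s -> i < j -> j < size s -> nth 0 s j < nth 0 s i.
Proof.
move=> hs ij js; have := sorted_ltn_nth trans_gt 0 hs.
by move=> /(_ i j); apply => //; rewrite inE //; apply: ltn_trans js.
Qed.

Lemma sdec_le s i j : sdec s -> i <= j -> j < size s -> nth 0 s j <= nth 0 s i.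
Proof.
move=> hs; rewrite leq_eqVlt => /orP [/eqP -> //|ij js].
by apply: ltnW; apply: sdec_lt.
Qed.

Lemma le_F_e a s j : ext_le (Fin a) (entry s j) = (j < size s) && (a <= nth 0 s j).
Proof. by rewrite /entry; case: ifP. Qed.
Lemma lt_e_F a s j : ext_lt (entry s j) (Fin a) = (j < size s) ==> (nth 0 s j < a).
Proof. by rewrite /entry /ext_lt; case: ifP => //= _; rewrite ltnNge. Qed.
Lemma lt_F_e a s j : ext_lt (Fin a) (entry s j) = (j < size s) && (a < nth 0 s j).
Proof. by rewrite /entry /ext_lt; case: ifP => //= _; rewrite ltnNge. Qed.
Lemma le_e_F a s j : ext_le (entry s j) (Fin a) = (j < size s) ==> (nth 0 s j <= a).
Proof. by rewrite /entry; case: ifP. Qed.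

Lemma sdec_set_nth s k v : sdec s -> k < size s ->
  (0 < k -> v < nth 0 s k.-1) -> (k.+1 < size s -> nth 0 s k.+1 < v) ->
  sdec (set_nth 0 s k v).
Proof.
move=> hs ks h1 h2; apply/(sortedP 0) => i.
rewrite size_set_nth (maxn_idPr ks) => isz.
have := (sortedP 0 hs) i isz.
rewrite !nth_set_nth /=.
case: (i =P k) => [ik|ik]; case: (i.+1 =P k) => [ik'|ik'] //.
- lia.
- by move=> _; rewrite ik; apply: h2; rewrite -ik.
- by move=> _; rewrite -ik' /= in h1; apply: h1.
Qed.

Lemma mem_set_nth_uniq (s : seq nat) k v x : uniq s -> k < size s ->
  (x \in set_nth 0 s k v) = (x == v) || ((x \in s) && (x != nth 0 s k)).
Proof.
move=> us ks.
have ds : s = take k s ++ nth 0 s k :: drop k.+1 s by rewrite -drop_nth // cat_take_drop.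
rewrite set_nthE ks.
have : uniq (take k s ++ nth 0 s k :: drop k.+1 s) by rewrite -ds.
rewrite cat_uniq /= => /and3P [_ /norP [h1 _] /andP [h2 _]].
rewrite {3}ds !mem_cat !inE.
case: (x =P nth 0 s k) => [->|_]; first by rewrite (negbTE h1) (negbTE h2) andbF !orbF.
by rewrite andbT; case: (x \in take k s); case: (x == v); case: (x \in drop _ _).
Qed.

Lemma swap_Sbar (Y : symbol) k l :
  is_symbol Y -> k < size Y.1 -> l < size Y.2 ->
  nth 0 Y.1 k \notin Y.2 -> nth 0 Y.2 l \notin Y.1 ->
  sdec (set_nth 0 Y.1 k (nth 0 Y.2 l)) -> sdec (set_nth 0 Y.2 l (nth 0 Y.1 k)) ->
  in_Sbar Y (set_nth 0 Y.1 k (nth 0 Y.2 l), set_nth 0 Y.2 l (nth 0 Y.1 k)).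
Proof.
case: Y => [Y1 Y2] [/= s1 s2] ks ls hu hv t1 t2.
set u := nth 0 Y1 k in hu t2 *; set v := nth 0 Y2 l in hv t1 *.
have uY1 : u \in Y1 by apply: mem_nth.
have vY2 : v \in Y2 by apply: mem_nth.
have irr : irreflexive (fun x y : nat => y < x) by move=> x; rewrite ltnn.
have u1 := sorted_uniq trans_gt irr s1.
have u2 := sorted_uniq trans_gt irr s2.
have gtot : total (fun x y : nat => y <= x) by move=> x y; apply: leq_total.
have gtr : transitive (fun x y : nat => y <= x) by move=> a b c h h'; apply: leq_trans h' h.
have gas : antisymmetric (fun x y : nat => y <= x) by move=> a b h; apply/eqP; rewrite eqn_leq andbC.
have sgeq t : sdec t -> sorted (fun x y : nat => y <= x) t.
  by move=> ht; apply: sub_sorted ht => a b /ltnW.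
exists [:: u; v]; split.
  by rewrite /= /in_single /= uY1 vY2 (negbTE hu) (negbTE hv).
rewrite /move_entries /=; congr pair.
- rewrite -(sorted_sort gtr (sgeq _ t1)); apply/(perm_sortP gtot gtr gas).
  apply: uniq_perm.
  + by apply: sorted_uniq t1 => //; apply: trans_gt.
  + rewrite cat_uniq !filter_uniq //= andbT; apply/hasPn => x.
    by rewrite !mem_filter => /andP [-> _].
  + move=> x; rewrite mem_set_nth_uniq // mem_cat !mem_filter !inE.
    case: (x =P v) => [->|/eqP xv]; first by rewrite vY2 (negbTE hv); case: (v == u).
    case: (x =P u) => [->|/eqP xu] /=; first by rewrite ?andbF ?(negbTE hu).
    by rewrite andbT orbF.
- rewrite -(sorted_sort gtr (sgeq _ t2)); apply/(perm_sortP gtot gtr gas).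
  apply: uniq_perm.
  + by apply: sorted_uniq t2 => //; apply: trans_gt.
  + rewrite cat_uniq !filter_uniq //= andbT; apply/hasPn => x.
    by rewrite !mem_filter => /andP [-> _].
  + move=> x; rewrite mem_set_nth_uniq // mem_cat !mem_filter !inE.
    case: (x =P u) => [->|/eqP xu]; first by rewrite uY1 (negbTE hu); case: (u == v).
    case: (x =P v) => [->|/eqP xv] /=; first by rewrite ?andbF ?(negbTE hv).
    by rewrite ?andbT ?orbF.
Qed.

Lemma Sbar_mem Y L : in_Sbar Y L -> forall x, x \in L.1 ++ L.2 -> x \in Y.1 ++ Y.2.
Proof.
case=> M [_ ->] x; rewrite /move_entries /= !mem_cat !mem_sort !mem_cat !mem_filter.
by case: (x \in M); case: (x \in Y.1); case: (x \in Y.2).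
Qed.

Lemma Sbar_both Y L : in_Sbar Y L -> forall x, x \in L.1 -> x \in L.2 -> x \in Y.1 /\ x \in Y.2.
Proof.
case=> M [_ ->] x; rewrite /move_entries /= !mem_sort !mem_cat !mem_filter.
by case: (x \in M); case: (x \in Y.1); case: (x \in Y.2).
Qed.

Lemma Sbar_size Y L : in_Sbar Y L -> size L.1 + size L.2 = size Y.1 + size Y.2.
Proof.
case=> M [_ ->]; rewrite /move_entries /= !size_sort !size_cat !size_filter.
have h1 : count (fun x : nat => x \notin M) Y.1 + count (fun x => x \in M) Y.1 = size Y.1.
  by rewrite addnC; apply: count_predC.
have h2 : count (fun x : nat => x \notin M) Y.2 + count (fun x => x \in M) Y.2 = size Y.2.
  by rewrite addnC; apply: count_predC.
rewrite -h1 -h2 addnACA [RHS]addnACA; congr (_ + _); apply: addnC.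
Qed.

Lemma defect_nat (L : symbol) (k : nat) : defect L = Posz k -> size L.1 = size L.2 + k.
Proof. rewrite /defect => h. lia. Qed.


Lemma nthPn (s : seq nat) (x : nat) : x \in s -> exists2 i, i < size s & nth 0 s i = x.
Proof. by move/(nthP 0). Qed.

Lemma concl (P Q X1 X2 P' Q' : seq nat) :
  sdec P -> sdec Q -> sdec X1 ->
  size P' = size P -> size Q' = size Q -> size Q <= size P -> size P <= (size Q).+1 ->
  size P <= size X2 -> (size Q).+1 <= size X1 -> size P <= size X1 ->
  (forall j, j < size P -> nth 0 P j < nth 0 X1 j /\ nth 0 X2 j <= nth 0 P j) ->
  (forall j, j < size Q -> nth 0 Q j < nth 0 X2 j /\ nth 0 X1 j.+1 <= nth 0 Q j) ->
  (forall j, j < size P -> nth 0 X2 j <= nth 0 P' j /\ (0 < j -> nth 0 P' j < nth 0 X2 j.-1)) ->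
  (forall j, j < size Q -> nth 0 X1 j.+1 <= nth 0 Q' j /\ nth 0 Q' j < nth 0 X1 j) ->
  (forall x, x \in P' ++ Q' -> x \in P ++ Q) ->
  (forall x, x \in P' -> x \in Q' -> x \in P /\ x \in Q) ->
  P' = P /\ Q' = Q.
Proof.
move=> sP sQ sX1 eP eQ qp pq px2 qx1 px1 hP hQ hP' hQ' hmem hboth.
have ha : forall i j x, i < size P -> j < size P -> x = nth 0 P i ->
    nth 0 X2 j <= x -> (0 < j -> x < nth 0 X2 j.-1) -> i = j.
  move=> i j x ip jp -> h1 h2.
  case: (ltngtP i j) => // ij.
  - have h3 := sdec_le sP (i:=i) (j:=j.-1) ltac:(lia) ltac:(lia).
    have [_ h4] := hP j.-1 ltac:(lia).
    have := h2 ltac:(lia); lia.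
  - have h3 := sdec_le sP (i:=j.+1) (j:=i) ltac:(lia) ltac:(lia).
    have [h4 _] := hP j.+1 ltac:(lia).
    have [h5 h6] := hQ j ltac:(lia).
    lia.
have hb : forall i j x, i < size Q -> j < size Q -> x = nth 0 Q i ->
    nth 0 X1 j.+1 <= x -> x < nth 0 X1 j -> i = j.
  move=> i j x iq jq -> h1 h2.
  case: (ltngtP i j) => // ij.
  - case: j jq h1 h2 ij => [|j] // jq h1 h2 ij.
    have h3 := sdec_le sQ (i:=i) (j:=j) ltac:(lia) ltac:(lia).
    have [_ h4] := hQ j ltac:(lia).
    lia.
  - have h3 := sdec_le sQ (i:=j.+1) (j:=i) ltac:(lia) ltac:(lia).
    have [h4 _] := hQ j.+1 ltac:(lia).
    have [h5 h6] := hP j.+1 ltac:(lia).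
    lia.
have key : forall j, (j < size P -> nth 0 P' j = nth 0 P j) /\
                     (j < size Q -> nth 0 Q' j = nth 0 Q j).
  elim/ltn_ind => j IH.
  have hc : j < size P -> nth 0 P' j = nth 0 P j.
    move=> jp.
    have [h1 h2] := hP' j jp.
    have : nth 0 P' j \in P ++ Q by apply: hmem; rewrite mem_cat mem_nth ?eP.
    rewrite mem_cat => /orP [/nthPn [i ip ei]|/nthPn [i iq ei]].
    + by rewrite -ei (ha i j _ ip jp (esym ei) h1 h2).
    + case: (ltngtP i.+1 j) => ij.
      * have [h3 h4] := hQ i iq.
        have h5 := sdec_le sX1 (i:=i.+1) (j:=j.-1) ltac:(lia) ltac:(lia).
        have [h6 h7] := hP j.-1 ltac:(lia).
        have := h2 ltac:(lia). lia.
      * have h3 := sdec_le sQ (i:=j) (j:=i) ltac:(lia) ltac:(lia).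
        have [h4 _] := hQ j ltac:(lia).
        lia.
      * have [_ e] := IH i ltac:(lia).
        have e' := e iq.
        have [xP _] : nth 0 P' j \in P /\ nth 0 P' j \in Q.
          apply: hboth; first by rewrite mem_nth ?eP.
          by rewrite -ei -e'; rewrite mem_nth ?eQ.
        move/nthPn: xP => [k kp ek].
        by rewrite -ek (ha k j _ kp jp (esym ek) h1 h2).
  split => // jq.
  have [h1 h2] := hQ' j jq.
  have : nth 0 Q' j \in P ++ Q by apply: hmem; rewrite mem_cat mem_nth ?eQ ?orbT.
  rewrite mem_cat => /orP [/nthPn [i ip ei]|/nthPn [i iq ei]].
  - case: (ltngtP i j) => ij.
    + have [h3 h4] := hP i ip.
      have [h5 h6] := hQ i ltac:(lia).
      have h7 := sdec_le sX1 (i:=i.+1) (j:=j) ltac:(lia) ltac:(lia).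
      lia.
    + have [h3 h4] := hP i ip.
      have h5 := sdec_le sX1 (i:=j.+1) (j:=i) ltac:(lia) ltac:(lia).
      lia.
    + subst i.
      have e := hc ltac:(lia).
      have [_ xQ] : nth 0 Q' j \in P /\ nth 0 Q' j \in Q.
        apply: hboth; last by rewrite mem_nth ?eQ.
        by rewrite -ei -e mem_nth ?eP.
      move/nthPn: xQ => [k kq ek].
      by rewrite -ek (hb k j _ kq jq (esym ek) h1 h2).
  - by rewrite -ei (hb i j _ iq jq (esym ei) h1 h2).
split; apply: (eq_from_nth (x0:=0)) => // j; rewrite ?eP ?eQ => js.
- by have [+ _] := key j; apply.
- by have [_ +] := key j; apply.
Qed.


Arguments ext_le : simpl never.
Arguments ext_lt : simpl never.
Arguments entry : simpl never.

Lemma defect_set (Y : symbol) k l a b : k < size Y.1 -> l < size Y.2 ->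
  defect (set_nth 0 Y.1 k a, set_nth 0 Y.2 l b) = defect Y.
Proof. by move=> h1 h2; rewrite /defect /= !size_set_nth (maxn_idPr h1) (maxn_idPr h2). Qed.

Lemma part1 m (Z Z' : symbol) : special1 m Z -> special0 m.+1 Z' -> regular Z' ->
  (forall L', inD m m.+1 Z Z' Z L' <-> L' = Z') ->
  forall L, inD m m.+1 Z Z' L Z' <-> L = Z.
Proof.
case: Z => A B; case: Z' => C D.
move=> [[sA sB] [/= zA [zB zAB]]] [[sC sD] [/= zC [zD [zDC zCD]]]] reg H L.
rewrite /= in sA sB sC sD.
split; last first; first by move=> ->; apply/H.
have nm : (m.+1 == m) = false by rewrite eqn_leq ltnn.
have [BZ [[SZ dZ] [SZ' dZ']]] : inD m m.+1 (A, B) (C, D) (A, B) (C, D) by apply/H.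
move: BZ; rewrite /Bplus /= nm => [[dd [hD hC]]].
have fDA j : j <= m -> nth 0 D j <= nth 0 A j.
  by move=> jm; have [+ _] := hD j ltac:(lia); rewrite le_F_e => /andP [_ ->].
have fAD j : j < m -> nth 0 A j.+1 < nth 0 D j.
  move=> jm; have [_ +] := hD j ltac:(lia); rewrite lt_e_F => /implyP; apply; lia.
have fCB j : j < m -> nth 0 C j.+1 <= nth 0 B j.
  by move=> jm; have [+ _] := hC j.+1 ltac:(lia); rewrite /= le_F_e => /andP [_ ->].
have fBC j : j < m -> nth 0 B j < nth 0 C j.
  move=> jm; have [_ +] := hC j ltac:(lia); rewrite lt_e_F => /implyP; apply; lia.
have neqCD j k : j <= m -> k <= m -> nth 0 C j != nth 0 D k.
  move=> jm km; apply/eqP => e; have := reg (nth 0 C j).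
  by rewrite mem_nth ?zC // e mem_nth ?zD.
have fDC j : j <= m -> nth 0 D j < nth 0 C j.
  move=> jm; have := zDC j ltac:(lia); have := neqCD j j jm jm; lia.
have fCD j : j < m -> nth 0 C j.+1 < nth 0 D j.
  move=> jm; have := zCD j ltac:(lia); have := neqCD j.+1 j jm (ltnW jm); lia.
have CnD j : j <= m -> nth 0 C j \notin D.
  move=> jm; apply/negP => h; have := reg (nth 0 C j); by rewrite mem_nth ?zC ?h //; lia.
have DnC j : j <= m -> nth 0 D j \notin C.
  move=> jm; apply/negP => h; have := reg (nth 0 D j); by rewrite mem_nth ?zD ?h // ?andbT; lia.
have symZ' : is_symbol (C, D) by [].
have sw1 j : j <= m -> (j < m -> nth 0 B j < nth 0 D j) -> nth 0 A j < nth 0 C j.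
  move=> jm hBD; rewrite ltnNge; apply/negP => hCA.
  set L'' := (set_nth 0 C j (nth 0 D j), set_nth 0 D j (nth 0 C j)).
  have : inD m m.+1 (A, B) (C, D) (A, B) L''.
    split; last split; [|by split|split].
    - rewrite /Bplus /= nm; split.
        by rewrite /L'' (defect_set (Y:=(C, D))) /= ?zC ?zD.
      split => i; rewrite size_set_nth nth_set_nth /= => il; have {}il : i < m.+1 by move: il; rewrite ?zC ?zD; lia.
      + case: (i =P j) => [->|ij]; last by apply: hD; rewrite zD.
        rewrite le_F_e lt_e_F; split; first by apply/andP; split => //; lia.
        apply/implyP => jA; have := fAD j ltac:(lia); have := fDC j jm; lia.
      + case: (i =P j) => [->|ij]; last by apply: hC; rewrite zC.
        split.
          case: j jm hBD hCA {L''} => [|j] jm hBD hCA //=.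
          rewrite le_F_e; apply/andP; split; first lia.
          have := fCB j ltac:(lia); have := fDC j.+1 jm; lia.
        rewrite lt_e_F; apply/implyP => jB; apply: hBD; lia.
    - apply: swap_Sbar => //=; rewrite ?zC ?zD ?CnD ?DnC //.
      + apply: sdec_set_nth; rewrite ?zC //.
          move=> j0; have := fDC j jm; have := sdec_lt sC (i:=j.-1) (j:=j) ltac:(lia) ltac:(lia); lia.
        move=> jj; apply: fCD; lia.
      + apply: sdec_set_nth; rewrite ?zD //.
          move=> j0; have := fCD j.-1 ltac:(lia); rewrite prednK //.
        move=> jj; have := fDC j jm; have := sdec_lt sD (i:=j) (j:=j.+1) ltac:(lia) ltac:(lia); lia.
    - by rewrite /L'' (defect_set (Y:=(C, D))) /= ?zC ?zD.
  move/H => [/(congr1 (fun s => nth 0 s j))]; rewrite nth_set_nth /= eqxx => e _.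
  by have := fDC j jm; rewrite e ltnn.
have sw2 j : j < m -> nth 0 A j.+1 < nth 0 C j.+1 -> nth 0 B j < nth 0 D j.
  move=> jm hAC; rewrite ltnNge; apply/negP => hDB.
  set L'' := (set_nth 0 C j.+1 (nth 0 D j), set_nth 0 D j (nth 0 C j.+1)).
  have : inD m m.+1 (A, B) (C, D) (A, B) L''.
    split; last split; [|by split|split].
    - rewrite /Bplus /= nm; split.
        by rewrite /L'' (defect_set (Y:=(C, D))) /= ?zC ?zD; try lia.
      split => i; rewrite size_set_nth nth_set_nth /= => il; have {}il : i < m.+1 by move: il; rewrite ?zC ?zD; lia.
      + case: (i =P j) => [->|ij]; last by apply: hD; rewrite zD.
        rewrite le_F_e lt_e_F; split.
          apply/andP; split; first lia.
          have := fCD j jm; have := fDA j ltac:(lia); lia.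
        by apply/implyP.
      + case: (i =P j.+1) => [->|ij]; last by apply: hC; rewrite zC.
        split => /=.
          by rewrite le_F_e; apply/andP; split; first lia.
        rewrite lt_e_F; apply/implyP => jB.
        have := fBC j.+1 ltac:(lia); have := fCD j jm; lia.
    - apply: swap_Sbar => //=; rewrite ?zC ?zD ?CnD ?DnC //; try lia.
      + apply: sdec_set_nth; rewrite ?zC //.
          by move=> _ /=; apply: fDC; lia.
        move=> jj; have := fCD j jm; have := sdec_lt sC (i:=j.+1) (j:=j.+2) ltac:(lia) ltac:(lia); lia.
      + apply: sdec_set_nth; rewrite ?zD //; try lia.
          move=> j0; have := fCD j jm; have := sdec_lt sD (i:=j.-1) (j:=j) ltac:(lia) ltac:(lia); lia.
        move=> _; apply: fDC; lia.
    - by rewrite /L'' (defect_set (Y:=(C, D))) /= ?zC ?zD; try lia.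
  move/H => [/(congr1 (fun s => nth 0 s j.+1))]; rewrite nth_set_nth /= eqxx => e _.
  by have := fCD j jm; rewrite e ltnn.
have strict : forall j, j <= m -> nth 0 A j < nth 0 C j /\ (j < m -> nth 0 B j < nth 0 D j).
  have gen : forall d j, j + d = m -> nth 0 A j < nth 0 C j /\ (j < m -> nth 0 B j < nth 0 D j).
    elim => [|d IH] j jd.
      have jm : j = m by lia.
      split; last lia.
      by apply: sw1; lia.
    have [h1 _] := IH j.+1 ltac:(lia).
    have h2 : j < m -> nth 0 B j < nth 0 D j by move=> jm; apply: sw2.
    split => //; apply: sw1 => //; lia.
  by move=> j jm; apply: (gen (m - j)); lia.
case: L => A' B' [BL [[SL dL] _]].
move: BL; rewrite /Bplus /= nm => [[_ [hD' hC']]].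
have s1 := Sbar_size SL; have s2 := defect_nat dL; rewrite /= zA zB in s1; simpl in s2.
have zA' : size A' = m.+1 by lia.
have zB' : size B' = m by lia.
have [-> ->] // : A' = A /\ B' = B.
apply: (@concl A B C D A' B' sA sB sC) => //; try lia.
- move=> j jp; split; first by have [] := strict j ltac:(lia).
  by apply: fDA; lia.
- move=> j jq; split; first by have [_ ] := strict j ltac:(lia); apply; lia.
  by apply: fCB; lia.
- move=> j jp; split.
    by have [+ _] := hD' j ltac:(lia); rewrite le_F_e => /andP [_ ->].
  move=> j0; have [_ +] := hD' j.-1 ltac:(lia); rewrite prednK // lt_e_F => /implyP; apply; lia.
- move=> j jq; split.
    by have [+ _] := hC' j.+1 ltac:(lia); rewrite /= le_F_e => /andP [_ ->].
  by have [_ +] := hC' j ltac:(lia); rewrite lt_e_F => /implyP; apply; lia.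
- exact: Sbar_mem SL.
- exact: Sbar_both SL.
Qed.


Arguments ext_le : simpl never.
Arguments ext_lt : simpl never.
Arguments entry : simpl never.

Lemma ltFF a b : ext_lt (Fin a) (Fin b) = (a < b).
Proof. by rewrite /ext_lt /ext_le /= ltnNge. Qed.
Lemma leFF a b : ext_le (Fin a) (Fin b) = (a <= b).
Proof. by []. Qed.

Lemma entry_set s k v i : k < size s ->
  entry (set_nth 0 s k v) i = if i == k then Fin v else entry s i.
Proof.
move=> ks; rewrite /entry size_set_nth (maxn_idPr ks) nth_set_nth /=.
by case: (i =P k) => [->|]; rewrite ?ks.
Qed.

Lemma part2 m (Z Z' : symbol) : special1 m Z -> special0 m Z' -> regular Z ->
  (forall L, inD m m Z Z' L Z' <-> L = Z) ->
  forall L', inD m m Z Z' Z L' <-> L' = Z'.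
Proof.
case: Z => A B; case: Z' => C D.
move=> [[sA sB] [/= zA [zB zAB]]] [[sC sD] [/= zC [zD [zDC zCD]]]] reg H L.
rewrite /= in sA sB sC sD.
split; last first; first by move=> ->; apply/H.
have nm : (m == m) = true by rewrite eqxx.
have [BZ [[SZ dZ] [SZ' dZ']]] : inD m m (A, B) (C, D) (A, B) (C, D) by apply/H.
move: BZ; rewrite /Bplus /= nm => [[dd [hD hC]]].
have fDA j : j < m -> nth 0 D j < nth 0 A j.
  by move=> jm; have [+ _] := hD j ltac:(lia); rewrite lt_F_e => /andP [_ ->].
have fAD j : j < m -> nth 0 A j.+1 <= nth 0 D j.
  move=> jm; have [_ +] := hD j ltac:(lia); rewrite le_e_F => /implyP; apply; lia.
have fCB j : j.+1 < m -> nth 0 C j.+1 < nth 0 B j.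
  by move=> jm; have [+ _] := hC j.+1 ltac:(lia); rewrite /= lt_F_e => /andP [_ ->].
have fBC j : j < m -> nth 0 B j <= nth 0 C j.
  move=> jm; have [_ +] := hC j ltac:(lia); rewrite le_e_F => /implyP; apply; lia.
have neqAB j k : j <= m -> k < m -> nth 0 A j != nth 0 B k.
  move=> jm km; apply/eqP => e; have := reg (nth 0 A j).
  by rewrite mem_nth ?zA // e mem_nth ?zB.
have fBA j : j < m -> nth 0 B j < nth 0 A j.
  move=> jm; have [h _] := zAB j jm; have := neqAB j j (ltnW jm) jm; lia.
have fAB j : j < m -> nth 0 A j.+1 < nth 0 B j.
  move=> jm; have [_ h] := zAB j jm; have := neqAB j.+1 j jm jm; lia.
have AnB j : j <= m -> nth 0 A j \notin B.
  move=> jm; apply/negP => h; have := reg (nth 0 A j); by rewrite mem_nth ?zA ?h //; lia.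
have BnA j : j < m -> nth 0 B j \notin A.
  move=> jm; apply/negP => h; have := reg (nth 0 B j); by rewrite mem_nth ?zB ?h // ?andbT; lia.
have symZ : is_symbol (A, B) by [].
have sw1 j : j < m -> nth 0 D j < nth 0 B j -> nth 0 C j < nth 0 A j.
  move=> jm hDB; rewrite ltnNge; apply/negP => hAC.
  set L'' := (set_nth 0 A j (nth 0 B j), set_nth 0 B j (nth 0 A j)).
  have : inD m m (A, B) (C, D) L'' (C, D).
    split; first split; last split; [| |split|by split].
    - by rewrite /L'' (defect_set (Y:=(A, B))) /= ?zA ?zB; try lia.
    - rewrite /= nm /L'' /=; split => i il.
      + rewrite !entry_set ?zA; try lia.
        split.
          case: (i =P j) => [->|ij]; first by rewrite ltFF; lia.
          by have [] := hD i il.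
        case: (i.+1 =P j) => [ij|ij]; last by have [] := hD i il.
        rewrite leFF.
        have := fAD i ltac:(lia); have := fBA j jm; rewrite -ij; lia.
      + split.
          case: i il => [|i] il /=; first by [].
          rewrite entry_set ?zB //.
          case: (i =P j) => [ij|ij]; last by have [] := hC i.+1 il.
          rewrite ltFF; have := fCB i ltac:(lia); have := fBA j jm; rewrite ij; lia.
        rewrite entry_set ?zB //.
        case: (i =P j) => [->|ij]; last by have [] := hC i il.
        by rewrite leFF.
    - apply: swap_Sbar => //=; rewrite ?zA ?zB ?AnB ?BnA //; try lia.
      + apply: sdec_set_nth; rewrite ?zA //; try lia.
          move=> j0; have := fBA j jm; have := sdec_lt sA (i:=j.-1) (j:=j) ltac:(lia) ltac:(lia); lia.
        by move=> jj; apply: fAB.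
      + apply: sdec_set_nth; rewrite ?zB //.
          move=> j0; have := fAB j.-1 ltac:(lia); rewrite prednK //.
        move=> jj; have := fBA j jm; have := sdec_lt sB (i:=j) (j:=j.+1) ltac:(lia) ltac:(lia); lia.
    - by rewrite /L'' (defect_set (Y:=(A, B))) /= ?zA ?zB; try lia.
  move/H => [/(congr1 (fun s => nth 0 s j))]; rewrite nth_set_nth /= eqxx => e _.
  by have := fBA j jm; rewrite e ltnn.
have sw2 j : j < m -> (j.+1 < m -> nth 0 C j.+1 < nth 0 A j.+1) -> nth 0 D j < nth 0 B j.
  move=> jm hCA; rewrite ltnNge; apply/negP => hBD.
  set L'' := (set_nth 0 A j.+1 (nth 0 B j), set_nth 0 B j (nth 0 A j.+1)).
  have : inD m m (A, B) (C, D) L'' (C, D).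
    split; first split; last split; [| |split|by split].
    - by rewrite /L'' (defect_set (Y:=(A, B))) /= ?zA ?zB; try lia.
    - rewrite /= nm /L'' /=; split => i il.
      + rewrite !entry_set ?zA; try lia.
        split.
          case: (i =P j.+1) => [ie|ij]; last by have [] := hD i il.
          subst i; rewrite ltFF; have := fDA j.+1 ltac:(lia); have := fAB j jm; lia.
        case: (i.+1 =P j.+1) => [[->]|ij]; last by have [] := hD i il.
        by rewrite leFF.
      + split.
          case: i il => [|i] il /=; first by [].
          rewrite entry_set ?zB //.
          case: (i =P j) => [ie|ij]; last by have [] := hC i.+1 il.
          by subst i; rewrite ltFF; apply: hCA; lia.
        rewrite entry_set ?zB //.
        case: (i =P j) => [->|ij]; last by have [] := hC i il.
        rewrite leFF; have := fAB j jm; have := fBC j jm; lia.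
    - apply: swap_Sbar => //=; rewrite ?zA ?zB ?AnB ?BnA //; try lia.
      + apply: sdec_set_nth; rewrite ?zA //; try lia.
          by move=> _ /=; apply: fBA.
        move=> jj; have := fAB j jm; have := sdec_lt sA (i:=j.+1) (j:=j.+2) ltac:(lia) ltac:(lia); lia.
      + apply: sdec_set_nth; rewrite ?zB //.
          move=> j0; have := fAB j jm; have := sdec_lt sB (i:=j.-1) (j:=j) ltac:(lia) ltac:(lia); lia.
        move=> jj; apply: fBA; lia.
    - by rewrite /L'' (defect_set (Y:=(A, B))) /= ?zA ?zB; try lia.
  move/H => [/(congr1 (fun s => nth 0 s j.+1))]; rewrite nth_set_nth /= eqxx => e _.
  by have := fAB j jm; rewrite e ltnn.
have strict : forall j, j < m -> nth 0 C j < nth 0 A j /\ nth 0 D j < nth 0 B j.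
  have gen : forall d j, j + d + 1 = m -> nth 0 C j < nth 0 A j /\ nth 0 D j < nth 0 B j.
    elim => [|d IH] j jd.
      have h2 : nth 0 D j < nth 0 B j by apply: sw2; lia.
      by split => //; apply: sw1 => //; lia.
    have [h1 _] := IH j.+1 ltac:(lia).
    have h2 : nth 0 D j < nth 0 B j by apply: sw2 => //; lia.
    by split => //; apply: sw1 => //; lia.
  by move=> j jm; apply: (gen (m - j.+1)); lia.
case: L => C' D' [BL [_ [SL dL]]].
move: BL; rewrite /Bplus /= nm => [[_ [hD' hC']]].
have s1 := Sbar_size SL; have s2 := defect_nat dL; rewrite /= zC zD in s1; simpl in s2.
have zC' : size C' = m by lia.
have zD' : size D' = m by lia.
have [-> ->] // : C' = C /\ D' = D.
apply: (@concl C D A B C' D' sC sD sA) => //; try lia.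
- move=> j jp; split; first by have [] := strict j ltac:(lia).
  by apply: fBC; lia.
- move=> j jq; split; first by have [] := strict j ltac:(lia).
  by apply: fAD; lia.
- move=> j jp; split.
    by have [_ +] := hC' j ltac:(lia); rewrite le_e_F => /implyP; apply; lia.
  case: j jp => [|j] // jp _; have [+ _] := hC' j.+1 ltac:(lia).
  by rewrite /= lt_F_e => /andP [_ ->].
- move=> j jq; split.
    by have [_ +] := hD' j ltac:(lia); rewrite le_e_F => /implyP; apply; lia.
  by have [+ _] := hD' j ltac:(lia); rewrite lt_F_e => /andP [_ ->].
- exact: Sbar_mem SL.
- exact: Sbar_both SL.
Qed.

Unset Implicit Arguments.

Theorem lemma0805 (m m' : nat) (Z Z' : symbol) :
  special1 m Z -> special0 m' Z' -> (m' = m \/ m' = m.+1) ->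
  (m' = m.+1 -> regular Z' ->
     (forall L', inD m m' Z Z' Z L' <-> L' = Z') ->
     (forall L, inD m m' Z Z' L Z' <-> L = Z)) /\
  (m' = m -> regular Z ->
     (forall L, inD m m' Z Z' L Z' <-> L = Z) ->
     (forall L', inD m m' Z Z' Z L' <-> L' = Z')).
Proof.
move=> hZ hZ' _; split.
- by move=> e; subst m'; apply: part1.
- by move=> e; subst m'; apply: part2.
Qed.
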